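(* Let $M\ge1$, let $\zeta_M$ be a primitive $M$-th root of unity, and let $f(x)\in\mathbb C[x]$ be monic with $f(0)\neq0$. Then $f(x)$ divides $f(x^k)$ in $\mathbb C[x]$ for all integers $k\ge1$ with $k\equiv1\pmod M$ if and only if $f(x)$ equals, up to a nonzero constant factor, $\operatorname{lcm}_{m\ge1,\,0\le j\le M-1}(\zeta_M^jx^m-1)^{h_{m,j}}$ for some integers $h_{m,j}\ge0$, only finitely many of which are nonzero. *)

(* Defs.v *)
From mathcomp Require Import all_boot all_algebra.
From mathcomp Require Import complex.
From mathcomp Require Import Rstruct.
From Stdlib Require Import Reals.

Set Implicit Arguments.
Unset Strict Implicit.
Unset Printing Implicit Defensive.

Import GRing.Theory Num.Theory.
Local Open Scope ring_scope.

Definition C : numClosedFieldType := (Rdefinitions.R)[i].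

(* lcm of two polynomials over a field (well defined up to a nonzero
   constant factor, which is all the statement uses). *)
Definition lcmp (p q : {poly C}) : {poly C} := (p * q) %/ gcdp p q.

Definition lcm_family (M : nat) (zeta : C) (N : nat)
    (h : nat -> 'I_M -> nat) : {poly C} :=
  \big[lcmp/1]_(1 <= m < N.+1)
     \big[lcmp/1]_(j < M) ((zeta ^+ j)%:P * 'X^m - 1) ^+ (h m j).

(* Main.v *)
Require Import Defs.
From mathcomp Require Import all_boot all_algebra.
From mathcomp Require Import complex.
From mathcomp Require Import zify.
From Stdlib Require Import ClassicalEpsilon Classical_Prop.

Import GRing.Theory Num.Theory.
Local Open Scope ring_scope.

Lemma mup_dvdp (a : C) (p q : {poly C}) : q != 0 -> p %| q ->
  (mup a p <= mup a q)%N.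
Proof.
move=> q0 pq; have p0 : p != 0.
  by apply: contraNneq q0 => p0; rewrite -dvd0p -p0.
by rewrite mup_geq //; apply: dvdp_trans pq; rewrite -mup_geq.
Qed.

Lemma mup_XsubC (a b : C) : mup b ('X - a%:P) = (a == b).
Proof. by have := mup_XsubCX 1 b a; rewrite expr1 => ->; case: eqP. Qed.

Lemma mup_le_dvdp (p q : {poly C}) : p != 0 -> q != 0 ->
  (forall a, (mup a p <= mup a q)%N) -> p %| q.
Proof.
move: {2}(size p) (leqnn (size p)) => n; elim: n p q => [|n IH] p q.
  by rewrite leqn0 size_poly_eq0 => /eqP ->; rewrite eqxx.
move=> sp p0 q0 H.
have [/closed_rootP [a ra]|] := boolP (size p != 1); last first.
  by rewrite negbK => /size_poly1P [c c0 ->]; rewrite -alg_polyC dvdpZl // dvd1p.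
have [p1 Ep] := factor_theorem _ _ ra.
have Xa0 : 'X - a%:P != 0 by rewrite polyXsubC_eq0.
have p10 : p1 != 0 by apply: contraNneq p0 => p10; rewrite Ep p10 mul0r.
have rq : root q a.
  rewrite -dvdp_XsubCl XsubC_dvd //; apply: leq_trans (H a).
  by rewrite Ep mupM // mup_XsubC eqxx addn1.
have [q1 Eq] := factor_theorem _ _ rq.
have q10 : q1 != 0 by apply: contraNneq q0 => q10; rewrite Eq q10 mul0r.
rewrite Ep Eq dvdp_mul // IH //.
  move: sp; rewrite Ep size_mul // size_XsubC addn2 /=.
  by rewrite -(prednK (_ : 0 < size p1)%N) ?size_poly_gt0.
move=> b; have := H b; rewrite Ep Eq !mupM //.
by rewrite leq_add2r.
Qed.

Lemma mupZ (a c : C) (p : {poly C}) : c != 0 -> mup a (c *: p) = mup a p.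
Proof. by move=> c0; rewrite -mul_polyC mupMr // rootC. Qed.

Lemma mupX (a : C) (p : {poly C}) n : p != 0 -> mup a (p ^+ n) = (n * mup a p)%N.
Proof.
move=> p0; elim: n => [|n IH]; first by rewrite expr0 mupNroot // root1.
by rewrite exprS mupM ?expf_neq0 // IH mulSn.
Qed.

Lemma lcmp_mup (a : C) (p q : {poly C}) : p != 0 -> q != 0 ->
  lcmp p q != 0 /\ mup a (lcmp p q) = maxn (mup a p) (mup a q).
Proof.
move=> p0 q0; rewrite /lcmp.
have g0 : gcdp p q != 0 by rewrite gcdp_eq0 negb_and p0.
have dg : gcdp p q %| p * q by rewrite dvdp_mulr // dvdp_gcdl.
have E := divpK dg.
have l0 : p * q %/ gcdp p q != 0.
  by apply: contraTneq (mulf_neq0 p0 q0) => l0; rewrite -E l0 mul0r eqxx.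
split => //.
have := congr1 (mup a) E; rewrite !mupM //.
have -> : mup a (gcdp p q) = minn (mup a p) (mup a q).
  apply/eqP; rewrite eqn_leq; apply/andP; split.
    by rewrite leq_min !mup_dvdp // ?dvdp_gcdl ?dvdp_gcdr.
  by rewrite mup_geq // dvdp_gcd -!mup_geq // ?geq_minl ?geq_minr.
move: (mup a (_ %/ _)) (mup a p) (mup a q) => x y z; lia.
Qed.

Lemma mup_XnsubC (a c : C) k : a != 0 -> (0 < k)%N ->
  mup a ('X^k - c%:P) = (a ^+ k == c).
Proof.
move=> a0 k0; have [<-|ne] := eqVneq (a ^+ k) c; last first.
  by rewrite mupNroot // rootE !hornerE subr_eq0.
have -> : 'X^k - (a ^+ k)%:P = ('X - a%:P) *
   \sum_(i < k) 'X ^+ (k.-1 - i) * a%:P ^+ i by rewrite rmorphXn subrXX.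
rewrite mupMl ?mup_XsubC ?eqxx //.
rewrite rootE horner_sum.
have -> : \sum_(i < k) ('X ^+ (k.-1 - i) * a%:P ^+ i).[a] =
          \sum_(i < k) a ^+ k.-1.
  apply: eq_bigr => i _; rewrite hornerM hornerXn -rmorphXn hornerC -exprD.
  by rewrite subnK // -ltnS prednK.
by rewrite sumr_const card_ord -mulr_natl mulf_eq0 pnatr_eq0 negb_or -lt0n k0 expf_neq0.
Qed.

Lemma mup_comp (a : C) (f : {poly C}) k : f != 0 -> a != 0 -> (0 < k)%N ->
  mup a (f \Po 'X^k) = mup (a ^+ k) f.
Proof.
move=> f0 a0 k0; have [r Ef] := closed_field_poly_normal f.
have lc0 : lead_coef f != 0 by rewrite lead_coef_eq0.
rewrite Ef comp_polyZ !mupZ // mu_prod_XsubC.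
have -> : (\prod_(z <- r) ('X - z%:P)) \Po 'X^k = \prod_(z <- r) ('X^k - z%:P).
  elim: (r) => [|z s IH]; first by rewrite !big_nil comp_polyC.
  by rewrite !big_cons comp_polyM IH comp_polyB comp_polyX comp_polyC.
elim: r {Ef} => [|z r IH]; first by rewrite big_nil mupNroot ?root1.
rewrite big_cons mupM.
- by rewrite IH mup_XnsubC //= eq_sym.
- by rewrite monic_neq0 // monicXnsubC.
- by rewrite monic_neq0 // monic_prod // => i _; rewrite monicXnsubC.
Qed.

Lemma lcm_big_mup (I : eqType) (r : seq I) (P : pred I) (F : I -> {poly C}) b :
  (forall i, i \in r -> P i -> F i != 0) ->
  \big[lcmp/1]_(i <- r | P i) F i != 0 /\
  mup b (\big[lcmp/1]_(i <- r | P i) F i) = (\max_(i <- r | P i) mup b (F i))%N.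
Proof.
elim: r => [|x r IH] H; first by rewrite !big_nil oner_eq0 mupNroot ?root1.
have [IH1 IH2] : \big[lcmp/1]_(i <- r | P i) F i != 0 /\
  mup b (\big[lcmp/1]_(i <- r | P i) F i) = (\max_(i <- r | P i) mup b (F i))%N.
  by apply: IH => i ir; apply: H; rewrite inE ir orbT.
rewrite !big_cons; case: ifP => Px //.
have Fx : F x != 0 by apply: H; rewrite ?inE ?eqxx.
have [L1 L2] := lcmp_mup b _ _ Fx IH1.
by split; rewrite // L2 IH2.
Qed.

Lemma mup_term (b z : C) m h : z != 0 -> (0 < m)%N ->
  (z%:P * 'X^m - 1) != 0 /\
  mup b ((z%:P * 'X^m - 1) ^+ h) = (if z * b ^+ m == 1 then h else 0%N).
Proof.
move=> z0 m0.
have E : z%:P * 'X^m - 1 = z *: ('X^m - (z^-1)%:P).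
  by rewrite scalerBr -!mul_polyC -polyCM mulfV.
have p0 : z%:P * 'X^m - 1 != 0.
  by rewrite E scaler_eq0 negb_or z0 monic_neq0 // monicXnsubC.
split => //; rewrite mupX //.
case: eqP => [Hb|Hb]; last first.
  by rewrite mupNroot ?muln0 // rootE !hornerE subr_eq0; apply/eqP.
have b0 : b != 0.
  by apply: contra_eq_neq Hb => ->; rewrite expr0n eqn0Ngt m0 mulr0 eq_sym oner_eq0.
rewrite E mupZ // mup_XnsubC //.
have -> : b ^+ m = z^-1 by rewrite -[b ^+ m](mulKf z0) Hb mulr1.
by rewrite eqxx muln1.
Qed.

Lemma lcm_family_mup M (zeta : C) N (h : nat -> 'I_M -> nat) b : zeta != 0 ->
  lcm_family zeta N h != 0 /\
  mup b (lcm_family zeta N h) =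
  (\max_(1 <= m < N.+1) \max_(j < M)
      (if (zeta ^+ j * b ^+ m == 1)%R then h m j else 0%N))%N.
Proof.
move=> z0; rewrite /lcm_family.
have inner m : (0 < m)%N ->
  \big[lcmp/1]_(j < M) ((zeta ^+ j)%:P * 'X^m - 1) ^+ (h m j) != 0 /\
  mup b (\big[lcmp/1]_(j < M) ((zeta ^+ j)%:P * 'X^m - 1) ^+ (h m j)) =
  (\max_(j < M) (if (zeta ^+ j * b ^+ m == 1)%R then h m j else 0%N))%N.
  move=> m0; have [I1 I2] := @lcm_big_mup _ (index_enum 'I_M) predT
     (fun j => ((zeta ^+ j)%:P * 'X^m - 1) ^+ (h m j)) b
     (fun j _ _ => expf_neq0 (h m j) (proj1 (mup_term b (zeta ^+ j) m (h m j) (expf_neq0 j z0) m0))).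
  split => //; rewrite I2; apply: eq_bigr => j _.
  by rewrite (proj2 (mup_term b (zeta ^+ j) m (h m j) (expf_neq0 j z0) m0)).
have mI m : m \in index_iota 1 N.+1 -> (0 < m)%N by rewrite mem_index_iota => /andP[].
have [O1 O2] := @lcm_big_mup _ (index_iota 1 N.+1) predT
   (fun m => \big[lcmp/1]_(j < M) ((zeta ^+ j)%:P * 'X^m - 1) ^+ (h m j)) b
   (fun m mr _ => proj1 (inner m (mI m mr))).
split => //; rewrite O2; apply: eq_big_seq => m mr.
by rewrite (proj2 (inner m (mI m mr))).
Qed.


Lemma pow_cong (x : C) M k : x ^+ M = 1 -> k = 1 %[mod M] -> x ^+ k = x.
Proof.
move=> eM kM; rewrite (divn_eq k M) exprD mulnC exprM eM expr1n mul1r kM.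
case: M eM {kM} => [|[|M]] eM; first by rewrite modn0 expr1.
  by rewrite modn1 expr0 -eM expr1.
by rewrite modn_small // expr1.
Qed.

Lemma comp_nz (f : {poly C}) k : f.[0] != 0 -> (0 < k)%N -> f \Po 'X^k != 0.
Proof.
move=> f00 k0; apply: contraNneq f00 => H.
by have := congr1 (horner^~ 0) H; rewrite /= horner_comp hornerXn expr0n eqn0Ngt k0 /= horner0 => ->.
Qed.

Lemma root_mup (f : {poly C}) a : f != 0 -> root f a = (0 < mup a f)%N.
Proof. by move=> f0; rewrite -dvdp_XsubCl XsubC_dvd. Qed.

Definition pb (P : Prop) : bool := if excluded_middle_informative P then true else false.
Lemma pbP (P : Prop) : pb P = true <-> P.
Proof. by rewrite /pb; case: excluded_middle_informative. Qed.

Lemma zeta_nz M (zeta : C) : (1 <= M)%N -> M.-primitive_root zeta -> zeta != 0.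
Proof.
move=> M1 pr; apply: contra_eq_neq (prim_expr_order pr) => ->.
by rewrite expr0n eqn0Ngt M1 eq_sym oner_eq0.
Qed.

Lemma dir_left M (zeta : C) (f : {poly C}) :
  (1 <= M)%N -> M.-primitive_root zeta ->
  f \is monic -> f.[0] != 0 ->
  (exists (h : nat -> 'I_M -> nat) (N : nat),
     (forall (m : nat) (j : 'I_M), (N < m)%N -> h m j = 0%N) /\
     exists c : C, c != 0 /\ f = c *: lcm_family zeta N h) ->
  (forall k : nat, (1 <= k)%N -> k = 1 %[mod M] -> f %| f \Po 'X^k).
Proof.
move=> M1 pr fmon f00 [h [N [_ [c [c0 Ef]]]]] k k1 kM.
have z0 := zeta_nz _ _ M1 pr; have f0 := monic_neq0 fmon.
have fk0 := comp_nz _ _ f00 k1.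
apply: (mup_le_dvdp _ _ f0 fk0) => a.
have [->|a0] := eqVneq a 0.
  have nr : ~~ root f 0 by rewrite rootE.
  by rewrite (mupNroot nr).
rewrite (mup_comp _ _ _ f0 a0 k1) Ef !(mupZ _ _ _ c0).
have [_ Lm] := @lcm_family_mup M zeta N h a z0; have [_ Lmk] := @lcm_family_mup M zeta N h (a ^+ k) z0.
rewrite Lm Lmk; apply/bigmax_leqP_seq => m mr _.
apply: (bigmaxn_sup_seq _ mr) => //.
apply/bigmax_leqP => j _; apply: (bigmax_sup j) => //.
case: ifP => // /eqP cond; rewrite ifT //.
have eM : (a ^+ m) ^+ M = 1.
  have zjM : (zeta ^+ j) ^+ M = 1 by rewrite -exprM mulnC exprM (prim_expr_order pr) expr1n.
  by have := congr1 (fun x => x ^+ M) cond; rewrite /= expr1n exprMn zjM mul1r.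
by rewrite -exprM mulnC exprM (pow_cong _ _ _ eM kM) cond.
Qed.

Section R.
Variables (M : nat) (zeta : C) (f : {poly C}).
Hypotheses (M1 : (1 <= M)%N) (pr : M.-primitive_root zeta)
  (fmon : f \is monic) (f00 : f.[0] != 0)
  (H : forall k : nat, (1 <= k)%N -> k = 1 %[mod M] -> f %| f \Po 'X^k).

Let f0 : f != 0 := monic_neq0 fmon.

Lemma root_nz a : root f a -> a != 0.
Proof. by apply: contraTneq => ->; rewrite rootE. Qed.

Lemma Hmu a t : root f a -> (mup a f <= mup (a ^+ (1 + M * t)) f)%N.
Proof.
move=> ra; have a0 := root_nz _ ra.
have k1 : (0 < 1 + M * t)%N by rewrite addnC addn1.
have kM : 1 + M * t = 1 %[mod M] by rewrite addnC mulnC modnMDl.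
have := mup_dvdp a _ _ (comp_nz _ _ f00 k1) (H _ k1 kM).
by rewrite (mup_comp _ _ _ f0 a0 k1).
Qed.

Lemma unity a : root f a -> exists n, (0 < n)%N /\ a ^+ n = 1.
Proof.
move=> ra; have a0 := root_nz _ ra.
apply: NNPP => NE.
have [rs Ef] := closed_field_poly_normal f.
have lc0 : lead_coef f != 0 by rewrite lead_coef_eq0.
have inrs b : root f b -> b \in rs.
  by rewrite Ef rootZ // root_prod_XsubC.
pose g t := a ^+ (1 + M * t).
have ginj : injective g.
  have gen t1 t2 : (t1 < t2)%N -> g t1 = g t2 -> False.
    move=> lt E; apply: NE; exists (M * (t2 - t1))%N; split.
      by rewrite muln_gt0 M1 subn_gt0.
    have : g t2 = g t1 * a ^+ (M * (t2 - t1)).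
      by rewrite /g -exprD -addnA -mulnDr subnKC // ltnW.
    rewrite -E => /eqP; rewrite -subr_eq0 -[X in X - _]mulr1 -mulrBr mulf_eq0.
    by rewrite expf_eq0 (negbTE a0) andbF subr_eq0 orFb => /eqP <-.
  move=> t1 t2 E; case: (ltngtP t1 t2) => // lt.
    by case: (gen _ _ lt E).
  by case: (gen _ _ lt (esym E)).
have sub : {subset map g (iota 0 (size rs).+1) <= rs}.
  move=> x /mapP [t _ ->]; apply: inrs.
  rewrite root_mup //; apply: leq_trans (Hmu _ t ra).
  by rewrite -root_mup.
have := uniq_leq_size _ sub.
rewrite map_inj_uniq // iota_uniq size_map size_iota ltnn => /(_ isT).
by [].
Qed.

Definition good m (j : 'I_M) a : Prop := zeta ^+ j * a ^+ m = 1 /\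
  forall b, zeta ^+ j * b ^+ m = 1 -> (mup a f <= mup b f)%N.

Lemma goodex a : root f a -> exists m (j : 'I_M), (0 < m)%N /\ good m j a.
Proof.
move=> ra; have a0 := root_nz _ ra; have z0 := zeta_nz _ _ M1 pr.
have [n [n0 an]] := unity _ ra.
have [d pa dn] := prim_order_exists n0 an.
have d0 := prim_order_gt0 pa.
pose g := gcdn d M; pose m := (d %/ g)%N.
have g0 : (0 < g)%N by rewrite gcdn_gt0 d0.
have Ed : d = (m * g)%N by rewrite divnK // dvdn_gcdl.
have m0 : (0 < m)%N by move: d0; rewrite Ed muln_gt0 => /andP[].
have ad : a ^+ d = 1 := prim_expr_order pa.
have amM : (a ^+ m) ^+ M = 1.
  have EM : M = (g * (M %/ g))%N by rewrite mulnC divnK // dvdn_gcdr.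
  by rewrite EM -exprM mulnA -Ed exprM ad expr1n.
have [i Ei] := prim_rootP pr amM.
pose j := Ordinal (ltn_pmod (M - i) M1).
exists m, j; split; first exact: m0.
have goodj : zeta ^+ j * a ^+ m = 1.
  rewrite Ei -exprD -(prim_expr_mod pr) modnDml subnK; last exact: ltnW.
  by rewrite modnn expr0.
split; first exact: goodj.
move=> b Hb.
have bm : b ^+ m = a ^+ m.
  by apply: (mulfI (expf_neq0 j z0)); rewrite Hb goodj.
have am0 : a ^+ m != 0 by rewrite expf_neq0.
pose gam := b / a.
have gm : gam ^+ m = 1 by rewrite /gam exprMn exprVn bm divff.
have pg : m.-primitive_root (a ^+ g).
  have := dvdn_prim_root pa (_ : (m %| d)%N); rewrite {2}Ed mulKn //.
  by apply; rewrite Ed dvdn_mulr.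
have [t Et] := prim_rootP pg gm.
have [u _ Hu] := Bezoutl d M1.
rewrite gcdnC -/g in Hu.
pose w := ((g + u * d) %/ M)%N.
have Ew : (w * M)%N = (g + u * d)%N by rewrite divnK.
have Eb : a ^+ (1 + M * (w * t)) = b.
  have EE : (M * (w * t))%N = (g * t + d * (u * t))%N.
    by rewrite mulnA (mulnC M w) Ew mulnDl (mulnC u d) -mulnA.
  rewrite exprD expr1 EE exprD !exprM ad !expr1n mulr1 -Et /gam.
  by rewrite mulrC divfK.
by rewrite -Eb; apply: Hmu.
Qed.
Lemma dir_right : exists (h : nat -> 'I_M -> nat) (N : nat),
     (forall (m : nat) (j : 'I_M), (N < m)%N -> h m j = 0%N) /\
     exists c : C, c != 0 /\ f = c *: lcm_family zeta N h.
Proof.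
have z0 := zeta_nz _ _ M1 pr.
have [rs Ef] := closed_field_poly_normal f.
have lc0 : lead_coef f != 0 by rewrite lead_coef_eq0.
have inrs b : root f b = (b \in rs).
  by rewrite Ef rootZ // root_prod_XsubC.
have coverN : exists N, forall a, a \in rs ->
    exists m (j : 'I_M), (0 < m <= N)%N /\ good m j a.
  have : forall a, a \in rs -> root f a by move=> a; rewrite inrs.
  elim: (rs) => [|x s IH] Hs; first by exists 0%N.
  have [N IHN] := IH (fun a ar => Hs a (mem_behead (s := x :: s) ar)).
  have [m0 [j0 [m00 g0]]] := goodex _ (Hs x (mem_head x s)).
  exists (maxn m0 N) => a; rewrite inE => /orP [/eqP ->|ar].
    by exists m0, j0; rewrite m00 leq_maxl.
  have [m [j [/andP [m1 mN] gm]]] := IHN a ar.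
  by exists m, j; rewrite m1 (leq_trans mN) ?leq_maxr.
have [N HN] := coverN.
pose h m (j : 'I_M) := if (m <= N)%N then
   (\max_(a <- rs | pb (good m j a)) mup a f)%N else 0%N.
exists h, N; split.
  by move=> m j mN; rewrite /h leqNgt mN.
have L0 := proj1 (@lcm_family_mup M zeta N h 0 z0).
have Lm b := proj2 (@lcm_family_mup M zeta N h b z0).
have eqm b : mup b f = mup b (lcm_family zeta N h).
  apply/eqP; rewrite eqn_leq; apply/andP; split; last first.
    rewrite Lm; apply/bigmax_leqP_seq => m mr _; apply/bigmax_leqP => j _.
    case: ifP => // /eqP cond; rewrite /h; case: ifP => // _.
    by apply/bigmax_leqP_seq => a ar /pbP [_ Hg]; exact: Hg _ cond.
  have [rb|nrb] := boolP (root f b); last by rewrite (mupNroot nrb).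
  have [m [j [/andP [m1 mN] [gc gH]]]] := HN b (etrans (esym (inrs b)) rb).
  rewrite Lm; apply: (bigmaxn_sup_seq m); first by rewrite mem_index_iota m1 ltnS.
    by [].
  apply: (bigmax_sup j) => //; rewrite gc eqxx /h mN.
  apply: leq_bigmax_seq; first by rewrite -inrs.
  by apply/pbP.
have dv1 : f %| lcm_family zeta N h.
  by apply: (mup_le_dvdp _ _ f0 L0) => b; rewrite eqm.
have dv2 : lcm_family zeta N h %| f.
  by apply: (mup_le_dvdp _ _ L0 f0) => b; rewrite eqm.
have : f %= lcm_family zeta N h by rewrite /eqp dv1 dv2.
case/eqpP => [[c1 c2]] /= /andP [c10 c20] E.
exists (c1^-1 * c2); split; first by rewrite mulf_neq0 ?invr_eq0.
by rewrite -scalerA -E scalerA mulVf // scale1r.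
Qed.
End R.

Theorem lemma2 (M : nat) (zeta : C) (f : {poly C}) :
  (1 <= M)%N -> M.-primitive_root zeta ->
  f \is monic -> f.[0] != 0 ->
  ((forall k : nat, (1 <= k)%N -> k = 1 %[mod M] -> f %| f \Po 'X^k) <->
   exists (h : nat -> 'I_M -> nat) (N : nat),
     (forall (m : nat) (j : 'I_M), (N < m)%N -> h m j = 0%N) /\
     exists c : C, c != 0 /\ f = c *: lcm_family zeta N h).
Proof.
move=> M1 pr fmon f00; split.
  by move=> H; apply: dir_right.
exact: dir_left.
Qed.
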